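(* Let $G=(V,E)$ be an intersecting hypergraph and $c\colon V\to\{0,1\}$ a colouring such that every $c$-monochromatic hitting set for $G$ has size at least $h$, where $h>r(G)$. Then there exist a partial function $f\colon\{0,1\}^V\to\{0,1,*\}$ and an input $x\in f^{-1}( * )$ such that $\mathrm{C}(f)\le r(G)$ and $\min\{\mathrm{C}_{\bar 0}(f,x),\mathrm{C}_{\bar 1}(f,x)\}\ge h$. Moreover $f$ can be taken monotone, in the sense that flipping any input bit from $0$ to $1$ never changes the value from $1$ to $0$ or $*$, nor from $*$ to $0$.
   Context: A hypergraph $G=(V,E)$ is intersecting if $e\cap e'\neq\emptyset$ for all $e,e'\in E$. A set $U\subseteq V$ is a hitting set if it intersects every edge; it is $c$-monochromatic if $c$ is constant on $U$. The rank $r(G)$ is the maximum edge size. For a partial function $f\colon\{0,1\}^V\to\{0,1,*\}$: a partial input $\rho\in\{0,1,*\}^V$ is consistent with $x$ if $\rho_v=x_v$ whenever $\rho_v\neq*$; $|\rho|$ is the number of non-$*$ entries; for $\Sigma\subseteq\{0,1,*\}$, $\rho$ is a $\Sigma$-certificate for $x$ if it is consistent with $x$ and $f(x')\in\Sigma$ for all $x'$ consistent with $\rho$; $\mathrm{C}_\Sigma(f,x)$ is the least size of such a certificate, $\mathrm{C}_\Sigma(f)=\max_{x\in f^{-1}(\Sigma)}\mathrm{C}_\Sigma(f,x)$; $0,1,\bar0,\bar1$ denote $\Sigma=\{0\},\{1\},\{1,*\},\{0,*\}$; $\mathrm{C}(f)=\max\{\mathrm{C}_0(f),\mathrm{C}_1(f)\}$.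 *)

(* Defs.v *)
From mathcomp Require Import all_boot.
Set Implicit Arguments. Unset Strict Implicit. Unset Printing Implicit Defensive.

Section Defs.
Variable V : finType.

Definition intersecting (E : {set {set V}}) : Prop :=
  forall e e', e \in E -> e' \in E -> e :&: e' != set0.

Definition hitting_set (E : {set {set V}}) (U : {set V}) : Prop :=
  forall e, e \in E -> U :&: e != set0.

Definition monochromatic (c : V -> bool) (U : {set V}) : Prop :=
  exists b : bool, forall v, v \in U -> c v = b.

Definition hrank (E : {set {set V}}) : nat := \max_(e in E) #|e|.

(* Inputs x in {0,1}^V; outputs in {0,1,*} encoded as option bool:
   Some false = 0, Some true = 1, None = *. *)
Definition input := {ffun V -> bool}.
Definition pfun := input -> option bool.
(* partial inputs: None = * *)
Definition pinput := {ffun V -> option bool}.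

Definition consistent (rho : pinput) (x : input) : bool :=
  [forall v, if rho v is Some b then x v == b else true].

Definition psize (rho : pinput) : nat := #|[set v | rho v != None]|.

Definition is_cert (f : pfun) (S : pred (option bool)) (rho : pinput) (x : input) : bool :=
  consistent rho x && [forall x' : input, consistent rho x' ==> S (f x')].

(* C_S(f,x): least size of an S-certificate for x (default #|V| if none,
   which only happens when f x \notin S). *)
Definition Cx (f : pfun) (S : pred (option bool)) (x : input) : nat :=
  \big[minn/#|V|]_(rho : pinput | is_cert f S rho x) psize rho.

Definition Cf (f : pfun) (S : pred (option bool)) : nat :=
  \max_(x : input | S (f x)) Cx f S x.

Definition S0 : pred (option bool) := fun o => o == Some false.
Definition S1 : pred (option bool) := fun o => o == Some true.
Definition Sbar0 : pred (option bool) := fun o => o != Some false.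
Definition Sbar1 : pred (option bool) := fun o => o != Some true.

Definition Ccert (f : pfun) : nat := maxn (Cf f S0) (Cf f S1).

Definition out_rank (o : option bool) : nat :=
  match o with Some false => 0 | None => 1 | Some true => 2 end.

Definition flip_on (x : input) (v : V) : input :=
  [ffun u => if u == v then true else x u].

Definition monotone_pfun (f : pfun) : Prop :=
  forall (x : input) (v : V), x v = false ->
    out_rank (f x) <= out_rank (f (flip_on x v)).
End Defs.

(* Main.v *)
Require Import Defs.
From mathcomp Require Import all_boot.
Set Implicit Arguments. Unset Strict Implicit. Unset Printing Implicit Defensive.

Section Proof.
Variable V : finType.
Variable E : {set {set V}}.
Hypothesis HI : intersecting E.

Definition allb (b : bool) (x : input V) (e : {set V}) : bool :=
  [forall v in e, x v == b].

Definition ff : pfun V := fun x =>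
  if [exists e in E, allb true x e] then Some true
  else if [exists e in E, allb false x e] then Some false else None.

Lemma ff_edge b x e : e \in E -> allb b x e -> ff x = Some b.
Proof.
move=> eE ab; rewrite /ff; case: b ab => ab.
  by case: existsP => // -[]; exists e; rewrite eE.
case: existsP => [[e' /andP[e'E ab']]|_].
  have := HI eE e'E; case: (set_0Vmem (e :&: e')) => [->|[u]]; first by rewrite eqxx.
  rewrite inE => /andP[ue ue'] _.
  by have := forallP ab u; have := forallP ab' u; rewrite ue ue' /= => /eqP -> .
by case: existsP => // -[]; exists e; rewrite eE.
Qed.

Lemma ff_some b x : ff x = Some b -> exists2 e, e \in E & allb b x e.
Proof.
rewrite /ff; case: existsP => [[e /andP[? ?]] [<-]|_]; first by exists e.
case: existsP => [[e /andP[? ?]] [<-]|_ //]; by exists e.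
Qed.

Lemma Cx_le (f : pfun V) S (x : input V) (rho : pinput V) : is_cert f S rho x -> Cx f S x <= psize rho.
Proof.
move=> hc; rewrite /Cx.
have : rho \in index_enum (pinput V) by rewrite mem_index_enum.
elim: (index_enum _) => // a r IH; rewrite inE big_cons => /orP[/eqP <-|rr].
  by rewrite hc geq_minl.
by case: ifP => _; rewrite ?(leq_trans (geq_minr _ _)) ?IH.
Qed.

Lemma Cf_le b : Cf ff (fun o => o == Some b) <= hrank E.
Proof.
apply/bigmax_leqP => x /eqP fx.
have [e eE ab] := ff_some fx.
pose rho : pinput V := [ffun v => if v \in e then Some (x v) else None].
have hc : is_cert ff (fun o => o == Some b) rho x.
  apply/andP; split.
    by apply/forallP => v; rewrite ffunE; case: ifP.
  apply/forallP => x'; apply/implyP => /forallP cons; apply/eqP.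
  apply: (ff_edge eE); apply/forallP => v; apply/implyP => ve.
  have := cons v; rewrite ffunE ve => /eqP ->.
  by have := forallP ab v; rewrite ve.
apply: leq_trans (Cx_le hc) _.
have -> : psize rho = #|e|.
  by rewrite /psize; apply: eq_card => v; rewrite inE ffunE; case: (v \in e).
exact: leq_bigmax_cond.
Qed.

Variable c : V -> bool.
Variable h : nat.
Hypothesis Hh : forall U : {set V}, hitting_set E U -> monochromatic c U -> h <= #|U|.

Definition x0 : input V := [ffun v => c v].

Lemma cert_lb b (rho : pinput V) : is_cert ff (fun o => o != Some b) rho x0 -> h <= psize rho.
Proof.
move=> /andP[/forallP c0 /forallP hc].
pose U := [set v | rho v == Some (~~ b)].
have hU : h <= #|U|.
  apply: Hh.
    move=> e eE; apply/negP => /eqP U0.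
    pose x' : input V := [ffun v => if rho v is Some a then a else b].
    have ab : allb b x' e.
      apply/forallP => v; apply/implyP => ve; rewrite ffunE.
    case E1: (rho v) => [a|] //.
    case: (a =P ~~ b) => [ab|]; last by move=> nab; apply/eqP; move: nab; case: (a); case: (b) => // ; case; reflexivity.
    have : v \in U :&: e by rewrite !inE E1 ab eqxx ve.
    by rewrite U0 inE.
    have := hc x'; rewrite (ff_edge eE ab) eqxx implybF => /negP; apply.
    by apply/forallP => v; rewrite ffunE; case: (rho v).
  exists (~~ b) => v; rewrite inE => /eqP rv.
  by have := c0 v; rewrite rv ffunE => /eqP.
apply: leq_trans hU _; apply: subset_leq_card; apply/subsetP => v; rewrite !inE => /eqP -> //.
Qed.

End Proof.

Theorem theorem2p2 (V : finType) (E : {set {set V}}) (c : V -> bool) (h : nat) :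
  intersecting E ->
  (forall U : {set V}, hitting_set E U -> monochromatic c U -> h <= #|U|) ->
  hrank E < h ->
  exists (f : pfun V) (x : input V),
    [/\ f x = None,
        Ccert f <= hrank E,
        h <= minn (Cx f (@Sbar0) x) (Cx f (@Sbar1) x)
      & monotone_pfun f].
Proof.
move=> HI Hh Hr.
have noe b : ~~ [exists e in E, allb b (x0 c) e].
  apply/negP => /existsP[e /andP[eE ab]].
  have : h <= #|e|.
    apply: Hh.
      by move=> e' e'E; rewrite setIC; apply: HI.
    by exists b => v ve; have := forallP ab v; rewrite ve ffunE => /eqP.
  by move/(leq_trans Hr); rewrite ltnNge (leq_bigmax_cond _ eE).
have fx0 : ff E (x0 c) = None by rewrite /ff (negbTE (noe true)) (negbTE (noe false)).
have lb b : h <= Cx (ff E) (fun o => o != Some b) (x0 c).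
  rewrite /Cx; apply: (big_ind (fun n => h <= n)).
  - pose rf : pinput V := [ffun v => Some (c v)].
    have : is_cert (ff E) (fun o => o != Some b) rf (x0 c).
      apply/andP; split; first by apply/forallP => v; rewrite !ffunE.
      apply/forallP => x'; apply/implyP => /forallP cons.
      have -> : x' = x0 c.
        by apply/ffunP => v; have := cons v; rewrite !ffunE => /eqP ->.
      by rewrite fx0.
    move/(cert_lb HI Hh) => H; apply: leq_trans H _.
    exact: max_card.
  - by move=> a b' ha hb; rewrite leq_min ha hb.
  - by move=> rho; apply: (cert_lb HI Hh).
exists (ff E), (x0 c); split => //.
- by rewrite /Ccert geq_max; apply/andP; split; apply: (Cf_le HI).
- by rewrite leq_min (lb false) (lb true).
move=> x v xv.
have mon u : x u -> flip_on x v u.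
  by rewrite /flip_on ffunE; case: eqP.
rewrite {1}/ff.
case: (boolP [exists e in E, allb true x e]) => [/existsP[e /andP[eE ab]]|nt].
  rewrite (@ff_edge _ E HI true _ e eE) //; apply/forallP => u; apply/implyP => ue.
  by have := forallP ab u; rewrite ue => /eqP /mon ->.
case: ifP => // nf.
rewrite /ff; case: ifP => // _; case: ifP => // /existsP[e /andP[eE ab]].
move/negbT: nf => /negP; case; apply/existsP; exists e; rewrite eE /=.
apply/forallP => u; apply/implyP => ue; have := forallP ab u; rewrite ue /=.
by case: (x u) (mon u) => // ->.
Qed.
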